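(* Let $\mu \in C^1(\mathbb{R})$ and a periodic $\phi\in C^2(\mathbb{R})$ satisfy $\phi''(x) = 1 - \int_{\mathbb{R}} \mu(\tfrac12 v^2 + \phi(x))\,dv$ together with assumptions (i)–(iv) below. Then $q(x) = \int_{\mathbb{R}} \mu'(\tfrac12 v^2 + \phi(x))\,dv > 0$ for some $x \in [0,P_\phi]$ (indeed for some $x\in[0,P_\phi/2]$). In particular, it is impossible that $\mu'(e) \le 0$ for all $e \in [\phi_-,\infty)$.
   Context: Assumptions: (i) $\mu\in C^1(\mathbb{R})$ is nonnegative; (ii) $\int_{\mathbb{R}} \mu(\tfrac12 v^2)\,dv = 1$; (iii) there are $\gamma>1$, $C>0$ with $|\mu'(y)| \le C/(1+|y|^\gamma)$ for all $y$; (iv) $\phi$ is nonconstant with minimal period $P_\phi$, and, writing $\phi_+ = \max\phi$, $\phi_- = \min\phi$, it is normalized so that $\phi(0)=\phi(P_\phi)=\phi_+$, $\phi(P_\phi/2) = \phi_-$, $\phi(x) = \phi(P_\phi - x)$ for all $x\in[0,P_\phi]$, and $\phi$ is strictly decreasing on $[0,P_\phi/2]$. *)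

(* Defs.v *)
From Stdlib Require Import Reals.
Open Scope R_scope.

(* |y|^g for real exponent g > 0, with the convention 0^g = 0
   (Stdlib's Rpower 0 g is exp (g * ln 0) = 1, so we special-case 0). *)
Definition abs_rpow (y g : R) : R :=
  match Req_EM_T y 0 with
  | left _ => 0
  | right _ => Rpower (Rabs y) g
  end.

Definition improper_integral (f : R -> R) (l : R) : Prop :=
  (forall a b : R, inhabited (Riemann_integrable f a b)) /\
  (forall eps : R, eps > 0 ->
     exists M : R, forall (a b : R) (pr : Riemann_integrable f a b),
       a <= - M -> M <= b -> Rabs (RiemannInt pr - l) < eps).

(* Main.v *)
Require Import Defs.
From Stdlib Require Import Reals.
From Coquelicot Require Import Coquelicot.
From Stdlib Require Import Reals Lra Psatz Classical.
Open Scope R_scope.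

Definition impr (f : R -> R) (l : R) : Prop :=
  (forall a b : R, ex_RInt f a b) /\
  (forall eps : R, eps > 0 -> exists M : R, forall a b : R,
       a <= - M -> M <= b -> Rabs (RInt f a b - l) < eps).

Lemma impr_of f l : improper_integral f l -> impr f l.
Proof.
  intros [H1 H2]; split.
  - intros a b; destruct (H1 a b) as [pr]; now apply ex_RInt_Reals_1.
  - intros eps He; destruct (H2 eps He) as [M HM]; exists M; intros a b Ha Hb.
    destruct (H1 a b) as [pr]; rewrite (RInt_Reals f a b pr); auto.
Qed.

Lemma impr_to f l : impr f l -> improper_integral f l.
Proof.
  intros [H1 H2]; split.
  - intros a b; constructor; now apply ex_RInt_Reals_0.
  - intros eps He; destruct (H2 eps He) as [M HM]; exists M; intros a b pr Ha Hb.
    rewrite <- (RInt_Reals f a b pr); auto.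
Qed.

Lemma impr_unique f l1 l2 : impr f l1 -> impr f l2 -> l1 = l2.
Proof.
  intros [_ H1] [_ H2].
  destruct (Req_dec l1 l2) as [e|ne]; auto.
  set (eps := Rabs (l1 - l2) / 2).
  assert (He : eps > 0) by (unfold eps; assert (l1 - l2 <> 0) by lra; pose proof (Rabs_pos_lt _ H); lra).
  destruct (H1 eps He) as [M1 HM1]; destruct (H2 eps He) as [M2 HM2].
  set (M := Rmax (Rabs M1) (Rabs M2)).
  assert (A1 : Rabs M1 <= M) by apply Rmax_l. assert (A2 : Rabs M2 <= M) by apply Rmax_r.
  pose proof (Rle_abs M1); pose proof (Rle_abs M2).
  pose proof (HM1 (-M) M ltac:(lra) ltac:(lra)).
  pose proof (HM2 (-M) M ltac:(lra) ltac:(lra)).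
  unfold eps in *.
  revert H3 H4; set (r := RInt f (-M) M); intros.
  unfold Rabs in *; repeat destruct Rcase_abs; lra.
Qed.

Lemma impr_le f g l1 l2 : (forall v, f v <= g v) -> impr f l1 -> impr g l2 -> l1 <= l2.
Proof.
  intros Hfg [E1 H1] [E2 H2].
  destruct (Rle_or_lt l1 l2) as [h|h]; auto; exfalso.
  set (eps := (l1 - l2) / 2).
  assert (He : eps > 0) by (unfold eps; lra).
  destruct (H1 eps He) as [M1 HM1]; destruct (H2 eps He) as [M2 HM2].
  set (M := Rmax (Rabs M1) (Rabs M2)).
  assert (A1 : Rabs M1 <= M) by apply Rmax_l. assert (A2 : Rabs M2 <= M) by apply Rmax_r.
  pose proof (Rle_abs M1); pose proof (Rle_abs M2).
  pose proof (HM1 (-M) M ltac:(lra) ltac:(lra)).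
  pose proof (HM2 (-M) M ltac:(lra) ltac:(lra)).
  assert (RInt f (-M) M <= RInt g (-M) M).
  { apply RInt_le; auto. pose proof (Rabs_pos M1); lra. }
  unfold eps in *.
  revert H3 H4 H5; set (r := RInt f (-M) M); set (s := RInt g (-M) M); intros.
  unfold Rabs in *; repeat destruct Rcase_abs; lra.
Qed.
Lemma RInt_inv2 K x y : 0 < x -> x <= y -> RInt (fun t => K / t^2) x y = K/x - K/y.
Proof.
  intros Hx Hxy.
  apply is_RInt_unique.
  replace (K/x - K/y) with (minus ((fun t => - K / t) y) ((fun t => - K / t) x))
    by (unfold minus, plus, opp; simpl; field; lra).
  apply (is_RInt_derive (fun t => - K / t) (fun t => K / t^2)).
  - intros t Ht. rewrite Rmin_left in Ht by lra. rewrite Rmax_right in Ht by lra.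
    auto_derive. lra. field. lra.
  - intros t Ht. rewrite Rmin_left in Ht by lra. rewrite Rmax_right in Ht by lra.
    apply (ex_derive_continuous (fun t => K / t^2)); auto_derive; nra.
Qed.

Lemma RInt_inv2_neg K x y : 0 < x -> x <= y -> RInt (fun t => K / t^2) (-y) (-x) = K/x - K/y.
Proof.
  intros Hx Hxy.
  apply is_RInt_unique.
  replace (K/x - K/y) with (minus ((fun t => - K / t) (-x)) ((fun t => - K / t) (-y)))
    by (unfold minus, plus, opp; simpl; field; lra).
  apply (is_RInt_derive (fun t => - K / t) (fun t => K / t^2)).
  - intros t Ht. rewrite Rmin_left in Ht by lra. rewrite Rmax_right in Ht by lra.
    auto_derive. lra. field. lra.
  - intros t Ht. rewrite Rmin_left in Ht by lra. rewrite Rmax_right in Ht by lra.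
    apply (ex_derive_continuous (fun t => K / t^2)); auto_derive; nra.
Qed.

Lemma ex_RInt_inv2 K a b : 0 < a -> a <= b -> ex_RInt (fun t => K / t^2) a b.
Proof.
  intros; apply (ex_RInt_continuous (V:=R_CompleteNormedModule)). intros z Hz.
  rewrite Rmin_left in Hz by lra. rewrite Rmax_right in Hz by lra.
  apply (ex_derive_continuous (fun t => K / t^2)); auto_derive; nra.
Qed.

Lemma ex_RInt_inv2_neg K a b : 0 < a -> a <= b -> ex_RInt (fun t => K / t^2) (-b) (-a).
Proof.
  intros; apply (ex_RInt_continuous (V:=R_CompleteNormedModule)). intros z Hz.
  rewrite Rmin_left in Hz by lra. rewrite Rmax_right in Hz by lra.
  apply (ex_derive_continuous (fun t => K / t^2)); auto_derive; nra.
Qed.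

Lemma abs_RInt_le_g f g a b : a <= b -> ex_RInt f a b -> ex_RInt g a b ->
  (forall t, a < t < b -> Rabs (f t) <= g t) -> Rabs (RInt f a b) <= RInt g a b.
Proof.
  intros Hab Ef Eg H.
  eapply Rle_trans. apply abs_RInt_le; auto.
  apply RInt_le; auto. apply (ex_RInt_norm f a b Ef).
Qed.

Lemma tail_ordered f K R0 : (forall a b, ex_RInt f a b) -> 0 < R0 ->
  (forall v, R0 <= Rabs v -> Rabs (f v) <= K / v^2) ->
  forall M x y, R0 <= M -> M <= x -> x <= y ->
  Rabs (RInt f x y) <= K/M /\ Rabs (RInt f (-y) (-x)) <= K/M.
Proof.
  intros E HR0 Hb M x y HM Hx Hy.
  assert (K0 : 0 <= K).
  { specialize (Hb R0 ltac:(rewrite Rabs_right; lra)).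
    pose proof (Rabs_pos (f R0)).
    assert (0 < R0^2) by (apply pow_lt; lra).
    assert (0 <= K / R0^2) by lra.
    destruct (Rle_or_lt 0 K); auto.
    assert (K / R0^2 < 0). { unfold Rdiv. apply Rmult_neg_pos; auto. apply Rinv_0_lt_compat; auto. }
    lra. }
  assert (KxM : K/x - K/y <= K/M).
  { assert (K/x <= K/M). { unfold Rdiv. apply Rmult_le_compat_l; auto. apply Rinv_le_contravar; lra. }
    assert (0 <= K/y). { unfold Rdiv. apply Rmult_le_pos; auto. left; apply Rinv_0_lt_compat; lra. }
    lra. }
  split.
  - rewrite <- RInt_inv2 in KxM by lra. eapply Rle_trans; [|exact KxM].
    apply abs_RInt_le_g; auto. apply ex_RInt_inv2; lra.
    intros t Ht. apply Hb. rewrite Rabs_right; lra.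
  - rewrite <- RInt_inv2_neg in KxM by lra. eapply Rle_trans; [|exact KxM].
    apply abs_RInt_le_g; auto. lra. apply ex_RInt_inv2_neg; lra.
    intros t Ht. apply Hb. rewrite Rabs_left; lra.
Qed.

Lemma RInt_swap' f a b : ex_RInt f a b -> RInt f b a = - RInt f a b.
Proof. intros E. rewrite <- (opp_RInt_swap f a b E). reflexivity. Qed.

Lemma K_nonneg f K R0 : 0 < R0 -> (forall v, R0 <= Rabs v -> Rabs (f v) <= K / v^2) -> 0 <= K.
Proof.
  intros HR0 Hb.
  specialize (Hb R0 ltac:(rewrite Rabs_right; lra)).
  pose proof (Rabs_pos (f R0)).
  assert (0 < R0^2) by (apply pow_lt; lra).
  destruct (Rle_or_lt 0 K); auto.
  assert (K / R0^2 < 0). { unfold Rdiv. apply Rmult_neg_pos; auto. apply Rinv_0_lt_compat; auto. }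
  lra.
Qed.
Lemma split3 f a b c d : (forall a b, ex_RInt f a b) ->
  RInt f a b = RInt f a c + RInt f c d + RInt f d b.
Proof.
  intros E.
  rewrite <- (RInt_Chasles f a c b) by auto.
  rewrite <- (RInt_Chasles f c d b) by auto.
  unfold plus; simpl. ring.
Qed.

Definition tails (f : R -> R) := forall eps, eps > 0 -> exists M, forall x y,
  M <= x -> M <= y -> Rabs (RInt f x y) <= eps /\ Rabs (RInt f (-x) (-y)) <= eps.

Lemma impr_exists f : (forall a b, ex_RInt f a b) -> tails f ->
  exists l, (forall a b, ex_RInt f a b) /\
  (forall eps : R, eps > 0 -> exists M : R, forall a b : R,
       a <= - M -> M <= b -> Rabs (RInt f a b - l) < eps).
Proof.
  intros E T.
  set (u := fun n : nat => RInt f (- INR n) (INR n)).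
  assert (Cu : Cauchy_crit u).
  { intros eps He. destruct (T (eps/3) ltac:(lra)) as [M HM].
    destruct (INR_unbounded M) as [N HN]. exists N; intros n m Hn Hm.
    apply le_INR in Hn; apply le_INR in Hm.
    unfold Rdist, u. rewrite (split3 f (- INR n) (INR n) (- INR m) (INR m) E).
    destruct (HM (INR m) (INR n)) as [A1 _]; try lra.
    destruct (HM (INR n) (INR m)) as [_ A2]; try lra.
    revert A1 A2. set (p := RInt f (INR m) (INR n)). 
    set (q := RInt f (- INR n) (- INR m)). set (r := RInt f (- INR m) (INR m)).
    intros. unfold Rabs in *; repeat destruct Rcase_abs; lra. }
  destruct (R_complete u Cu) as [l Hl]. exists l; split; auto.
  intros eps He. destruct (T (eps/3) ltac:(lra)) as [M HM].
  exists (Rabs M + 1). intros a b Ha Hb.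
  pose proof (Rle_abs M).
  destruct (Hl (eps/3) ltac:(lra)) as [N1 HN1].
  destruct (INR_unbounded (Rabs M + 1)) as [N2 HN2].
  set (n := Nat.max N1 N2).
  assert (n1 : (n >= N1)%nat) by lia. assert (n2 : (n >= N2)%nat) by lia.
  apply le_INR in n2. specialize (HN1 n n1). unfold Rdist, u in HN1.
  rewrite (split3 f a b (- INR n) (INR n) E).
  destruct (HM (-a) (INR n)) as [_ A1]; try lra.
  destruct (HM (INR n) b) as [A2 _]; try lra.
  rewrite Ropp_involutive in A1.
  revert A1 A2 HN1.
  set (p := RInt f (INR n) b). set (q := RInt f a (- INR n)). set (r := RInt f (- INR n) (INR n)).
  intros. unfold Rabs in *; repeat destruct Rcase_abs; lra.
Qed.

Lemma tails_of_bound f K R0 : (forall a b, ex_RInt f a b) -> 0 < R0 ->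
  (forall v, R0 <= Rabs v -> Rabs (f v) <= K / v^2) -> tails f.
Proof.
  intros E HR0 Hb eps He.
  pose proof (K_nonneg f K R0 HR0 Hb) as K0.
  exists (R0 + K/eps).
  assert (0 <= K/eps) by (unfold Rdiv; apply Rmult_le_pos; auto; left; apply Rinv_0_lt_compat; lra).
  assert (KM : K / (R0 + K/eps) <= eps).
  { apply (Rmult_le_reg_r (R0 + K/eps)). lra. unfold Rdiv at 1. rewrite Rmult_assoc, Rinv_l by lra.
    replace (eps * (R0 + K/eps)) with (eps * R0 + K) by (field; lra). nra. }
  intros x y Hx Hy.
  destruct (Rle_or_lt x y) as [h|h].
  - destruct (tail_ordered f K R0 E HR0 Hb (R0 + K/eps) x y) as [A1 A2]; try lra.
    rewrite RInt_swap' in A2 by auto. rewrite Rabs_Ropp in A2. split; lra.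
  - destruct (tail_ordered f K R0 E HR0 Hb (R0 + K/eps) y x) as [A1 A2]; try lra.
    rewrite RInt_swap' in A1 by auto. rewrite Rabs_Ropp in A1. split; lra.
Qed.
Lemma cont_shift (g : R -> R) p : continuity g -> forall v, continuous (fun v => g (v^2/2 + p)) v.
Proof.
  intros Hg v. apply continuity_pt_filterlim.
  apply (continuity_pt_comp (fun v => v^2/2+p) g).
  - apply derivable_continuous_pt. 
    apply (ex_derive_Reals_0 (fun v => v^2/2+p)). auto_derive; auto.
  - apply Hg.
Qed.

Lemma ex_shift (g : R -> R) p : continuity g -> forall a b, ex_RInt (fun v => g (v^2/2 + p)) a b.
Proof.
  intros Hg a b. apply (ex_RInt_continuous (V:=R_CompleteNormedModule)).
  intros; apply cont_shift; auto.
Qed.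

Lemma is_derive_shift (mu mu' : R -> R) c u :
  (forall y, derivable_pt_lim mu y (mu' y)) -> is_derive (fun z => mu (c + z)) u (mu' (c+u)).
Proof.
  intros H.
  assert (A := is_derive_comp mu (fun z => c + z) u (mu' (c+u)) 1).
  replace (mu' (c+u)) with (scal 1 (mu' (c+u))) by (unfold scal; simpl; unfold mult; simpl; ring).
  apply A. apply is_derive_Reals; apply H.
  auto_derive; auto.
Qed.

Lemma G_deriv (mu mu' : R -> R) R p :
  (forall y, derivable_pt_lim mu y (mu' y)) -> continuity mu' ->
  is_derive (fun p => RInt (fun v => mu (v^2/2 + p)) (-R) R) p
            (RInt (fun v => mu' (v^2/2 + p)) (-R) R).
Proof.
  intros Hd Hc.
  assert (Hmu : continuity mu) by (intros y; apply derivable_continuous_pt; exists (mu' y); apply Hd).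
  assert (DE : forall v u, Derive (fun z => mu (v^2/2 + z)) u = mu' (v^2/2+u)).
  { intros; apply is_derive_unique, is_derive_shift; auto. }
  assert (E : RInt (fun v => mu' (v^2/2 + p)) (-R) R =
              RInt (fun t => Derive (fun u => mu (t^2/2 + u)) p) (-R) R).
  { apply RInt_ext; intros; rewrite DE; auto. }
  rewrite E.
  apply (is_derive_RInt_param (fun u t => mu (t^2/2+u))).
  - exists (mkposreal 1 Rlt_0_1); intros y _ t _.
    exists (mu' (t^2/2 + y)); apply is_derive_shift; auto.
  - intros t _.
    apply continuity_2d_pt_ext with (f := fun u v => mu' (v^2/2 + u)).
    { intros; rewrite DE; auto. }
    apply continuity_1d_2d_pt_comp with (g := fun u v => v^2/2 + u). apply Hc.
    apply continuity_2d_pt_plus; [| apply continuity_2d_pt_id1].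
    apply continuity_2d_pt_ext with (f := fun u v => (v * v) * (/2)).
    { intros; simpl; field. }
    apply continuity_2d_pt_mult; [| apply continuity_2d_pt_const].
    apply continuity_2d_pt_mult; apply continuity_2d_pt_id2.
  - exists (mkposreal 1 Rlt_0_1); intros y _.
    apply (ex_shift mu y Hmu).
Qed.
Lemma mu'_bound (mu' : R -> R) gamma C m :
  1 < gamma -> 0 < C ->
  (forall y, Rabs (mu' y) <= C / (1 + abs_rpow y gamma)) ->
  forall xi v, m <= xi -> 2 + 2 * Rabs m <= Rabs v -> Rabs (mu' (v^2/2 + xi)) <= 4 * C / v^2.
Proof.
  intros Hg HC Hd xi v Hxi Hv.
  pose proof (Rabs_pos m). pose proof (Rle_abs (-m)). rewrite Rabs_Ropp in H0.
  assert (V2 : v^2 = Rabs v ^2) by (rewrite pow2_abs; auto).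
  assert (Hv2 : 4 + 8 * Rabs m <= v^2) by (rewrite V2; nra).
  set (y := v^2/2 + xi).
  assert (Hy : v^2/4 <= y) by (unfold y; lra).
  assert (Hy1 : 1 <= y) by lra. clearbody y.
  assert (HA : y <= abs_rpow y gamma).
  { unfold abs_rpow. destruct (Req_EM_T y 0). { exfalso. clear -e Hy1. lra. }
    rewrite Rabs_right by lra.
    rewrite <- (Rpower_1 y) at 1 by lra. apply Rle_Rpower; lra. }
  eapply Rle_trans; [apply Hd|].
  assert (v <> 0) by (intro h; rewrite h in Hv2; simpl in Hv2; lra).
  replace (4 * C / v^2) with (C / (v^2/4)) by (field; auto).
  unfold Rdiv. apply Rmult_le_compat_l; [lra|]. apply Rinv_le_contravar; lra.
Qed.

Lemma impr_approx f q K R0 : (forall a b, ex_RInt f a b) -> 0 < R0 ->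
  (forall v, R0 <= Rabs v -> Rabs (f v) <= K / v^2) -> impr f q ->
  forall R, R0 <= R -> Rabs (RInt f (-R) R - q) <= 2 * K / R.
Proof.
  intros E HR0 Hb [_ Hq] R HR.
  apply Rle_plus_epsilon. intros d Hd.
  destruct (Hq d Hd) as [M HM].
  pose proof (Rabs_pos M). pose proof (Rle_abs M). pose proof (Rle_abs (-M)). rewrite Rabs_Ropp in H1.
  set (b := R + Rabs M).
  specialize (HM (-b) b ltac:(unfold b; lra) ltac:(unfold b; lra)).
  destruct (tail_ordered f K R0 E HR0 Hb R R b) as [A1 A2]; try (unfold b; lra).
  rewrite (split3 f (-b) b (-R) R E) in HM.
  replace (2 * K / R) with (K/R + K/R) by (field; lra).
  revert A1 A2 HM. set (r1 := RInt f R b). set (r2 := RInt f (-b) (-R)). set (r := RInt f (-R) R).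
  intros. unfold Rabs in *; repeat destruct Rcase_abs; lra.
Qed.

Lemma F_mono (mu mu' : R -> R) K R0 m p1 p2 I1 I2 :
  (forall y, derivable_pt_lim mu y (mu' y)) -> continuity mu' -> 0 < R0 ->
  (forall xi v, m <= xi -> R0 <= Rabs v -> Rabs (mu' (v^2/2 + xi)) <= K / v^2) ->
  m <= p1 -> p1 < p2 ->
  (forall xi q, p1 < xi < p2 -> impr (fun v => mu' (v^2/2 + xi)) q -> q <= 0) ->
  impr (fun v => mu (v^2/2 + p1)) I1 -> impr (fun v => mu (v^2/2 + p2)) I2 -> I2 <= I1.
Proof.
  intros Hd Hc HR0 Hb Hm Hp HQ [_ H1] [_ H2].
  destruct (Rle_or_lt I2 I1) as [h|h]; auto; exfalso.
  assert (K0 : 0 <= K) by (apply (K_nonneg (fun v => mu' (v^2/2 + m)) K R0 HR0); intros; apply Hb; lra).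
  set (eps := (I2 - I1)/3). assert (He : eps > 0) by (unfold eps; lra).
  set (d := p2 - p1).
  destruct (H1 eps He) as [M1 HM1]; destruct (H2 eps He) as [M2 HM2].
  assert (0 <= 2*K*d/eps) by (unfold Rdiv; apply Rmult_le_pos; [unfold d; nra| left; apply Rinv_0_lt_compat; lra]).
  set (R := R0 + Rabs M1 + Rabs M2 + 2*K*d/eps + 1).
  pose proof (Rabs_pos M1); pose proof (Rabs_pos M2); pose proof (Rle_abs M1); pose proof (Rle_abs M2).
  specialize (HM1 (-R) R ltac:(unfold R; lra) ltac:(unfold R; lra)).
  specialize (HM2 (-R) R ltac:(unfold R; lra) ltac:(unfold R; lra)).
  set (G := fun p => RInt (fun v => mu (v^2/2 + p)) (-R) R).
  destruct (MVT_cor2 G (fun p => RInt (fun v => mu' (v^2/2 + p)) (-R) R) p1 p2 Hp) as [xi [Hxi Ixi]].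
  { intros c _. apply is_derive_Reals. apply G_deriv; auto. }
  assert (Ex : forall a b, ex_RInt (fun v => mu' (v^2/2 + xi)) a b) by (apply ex_shift; auto).
  assert (Bx : forall v, R0 <= Rabs v -> Rabs (mu' (v^2/2 + xi)) <= K / v^2) by (intros; apply Hb; lra).
  destruct (impr_exists _ Ex (tails_of_bound _ K R0 Ex HR0 Bx)) as [q Hq].
  assert (q0 : q <= 0) by (apply (HQ xi q); auto).
  pose proof (impr_approx _ q K R0 Ex HR0 Bx Hq R ltac:(unfold R; lra)) as Ap.
  assert (KR : 2 * K / R * d < eps).
  { assert (0 < R) by (unfold R; lra).
    apply (Rmult_lt_reg_r R); auto.
    replace (2 * K / R * d * R) with (2*K*d) by (field; lra).
    assert (2*K*d/eps * eps = 2*K*d) by (field; lra).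
    assert (eps * R = eps * (R0 + Rabs M1 + Rabs M2 + 1) + 2*K*d/eps*eps) by (unfold R; ring).
    nra. }
  assert (0 < d) by (unfold d; lra).
  unfold G in Hxi. cbv beta in Hxi. fold d in Hxi.
  revert Hxi Ap HM1 HM2 KR.
  set (r := RInt (fun v => mu' (v ^ 2 / 2 + xi)) (- R) R).
  set (g1 := RInt (fun v => mu (v ^ 2 / 2 + p1)) (- R) R).
  set (g2 := RInt (fun v => mu (v ^ 2 / 2 + p2)) (- R) R).
  set (t := 2 * K / R). intros.
  assert (r <= t) by (unfold Rabs in Ap; destruct Rcase_abs; lra).
  assert (r * d <= t * d) by nra.
  assert (E3 : I2 - I1 = 3 * eps) by (unfold eps; field).
  clearbody r g1 g2 t eps d R G.
  apply Rabs_def2 in HM1. apply Rabs_def2 in HM2. lra.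
Qed.
Lemma impr_zero : impr (fun _ => 0) 0.
Proof.
  split.
  - intros a b. apply (ex_RInt_const (V:=R_CompleteNormedModule)).
  - intros eps He. exists 0. intros a b _ _.
    rewrite (RInt_const (V:=R_CompleteNormedModule)). unfold scal; simpl; unfold mult; simpl.
    rewrite Rmult_0_r, Rminus_0_r, Rabs_R0. lra.
Qed.

Theorem theorem3
  (mu mu' : R -> R) (phi phi' phi'' : R -> R) (P gamma C : R)
  (Hmu_der : forall y, derivable_pt_lim mu y (mu' y))
  (Hmu'_cont : continuity mu')
  (Hmu_nonneg : forall y, 0 <= mu y)
  (Hmu_norm : improper_integral (fun v => mu (v ^ 2 / 2)) 1)
  (Hgamma : 1 < gamma) (HC : 0 < C)
  (Hmu'_decay : forall y, Rabs (mu' y) <= C / (1 + abs_rpow y gamma))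
  (Hphi_der : forall x, derivable_pt_lim phi x (phi' x))
  (Hphi'_der : forall x, derivable_pt_lim phi' x (phi'' x))
  (Hphi''_cont : continuity phi'')
  (HP : 0 < P)
  (Hper : forall x, phi (x + P) = phi x)
  (Hminper : forall T, 0 < T < P -> exists x, phi (x + T) <> phi x)
  (Hmax : forall x, phi x <= phi 0)
  (Hmin : forall x, phi (P / 2) <= phi x)
  (HP0 : phi P = phi 0)
  (Hsym : forall x, 0 <= x <= P -> phi x = phi (P - x))
  (Hdecr : forall x y, 0 <= x -> x < y -> y <= P / 2 -> phi y < phi x)
  (Hode : forall x, exists I, improper_integral (fun v => mu (v ^ 2 / 2 + phi x)) I
                             /\ phi'' x = 1 - I) :
  (exists x, 0 <= x <= P / 2 /\
     exists q, improper_integral (fun v => mu' (v ^ 2 / 2 + phi x)) q /\ 0 < q)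
  /\ ~ (forall e, phi (P / 2) <= e -> mu' e <= 0).
Proof.
  set (m := phi (P/2)).
  assert (HR0 : 0 < 2 + 2 * Rabs m) by (pose proof (Rabs_pos m); lra).
  assert (Hb := mu'_bound mu' gamma C m Hgamma HC Hmu'_decay).
  assert (Hphic : continuity phi) by (intros y; apply derivable_continuous_pt; exists (phi' y); apply Hphi_der).
  assert (Claim1 : exists x, 0 <= x <= P / 2 /\
     exists q, improper_integral (fun v => mu' (v ^ 2 / 2 + phi x)) q /\ 0 < q).
  { destruct (classic (exists x, 0 <= x <= P / 2 /\
     exists q, improper_integral (fun v => mu' (v ^ 2 / 2 + phi x)) q /\ 0 < q)) as [Hc|Hn]; auto.
    exfalso.
    assert (Hmono : forall a b, 0 <= a -> a < b -> b <= P/2 -> phi'' b <= phi'' a).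
    { intros a b Ha Hab HbP.
      destruct (Hode a) as [Ia [HIa Ea]]. destruct (Hode b) as [Ib [HIb Eb]].
      assert (Hlt : phi b < phi a) by (apply Hdecr; auto).
      assert (Ile : Ia <= Ib).
      { apply (F_mono mu mu' (4*C) (2 + 2 * Rabs m) m (phi b) (phi a) Ib Ia); auto. all: try apply impr_of; auto.
        { intros xi q Hxi Hq.
          destruct (IVT_cor (fun x => phi x - xi) a b) as [z [Hz Ez]].
          { intros y. apply continuity_pt_minus; auto. apply continuity_pt_const; intros u v; auto. }
          lra. nra.
          apply Rnot_lt_le. intros q0. apply Hn. exists z. split. lra.
          exists q. split; auto. apply impr_to.
          replace (phi z) with xi by lra. auto. } }
      lra. }
    assert (D0 : phi' 0 = 0).
    { apply (deriv_maximum phi (-1) 1 0 (exist _ (phi' 0) (Hphi_der 0))); try lra.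
      intros; apply Hmax. }
    assert (DP : phi' (P/2) = 0).
    { apply (deriv_minimum phi (P/2 - 1) (P/2 + 1) (P/2) (exist _ (phi' (P/2)) (Hphi_der (P/2)))); try lra.
      intros; apply Hmin. }
    destruct (MVT_cor2 phi phi' 0 (P/2)) as [c [Ec Hc]]; [lra| intros; auto |].
    assert (Hd := Hdecr 0 (P/2) ltac:(lra) ltac:(lra) ltac:(lra)).
    assert (pc : phi' c < 0) by nra.
    destruct (MVT_cor2 phi' phi'' 0 c) as [a1 [Ea1 Ha1]]; [lra| intros; auto |].
    destruct (MVT_cor2 phi' phi'' c (P/2)) as [b1 [Eb1 Hb1]]; [lra| intros; auto |].
    assert (phi'' a1 < 0) by nra.
    assert (phi'' b1 > 0) by nra.
    pose proof (Hmono a1 b1 ltac:(lra) ltac:(lra) ltac:(lra)). lra. }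
  split; auto.
  intros Hneg. destruct Claim1 as [x [_ [q [Hq q0]]]].
  assert (q <= 0).
  { apply (impr_le (fun v => mu' (v ^ 2 / 2 + phi x)) (fun _ => 0) q 0).
    - intros v. apply Hneg. unfold m. pose proof (Hmin x). assert (0 <= v^2) by nra. lra.
    - apply impr_of; auto.
    - apply impr_zero. }
  lra.
Qed.
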